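(* Assume (i)–(iii) of the standing assumption below. Then: (1) $\mathcal S_{\mathrm{LP}}$ is the convex hull of a finite number $M$ of its extreme points $\xi^{*,1},\ldots,\xi^{*,M}$ (called modes). (2) $y^*\cdot\lambda=1$. (3) $z^*_k>0$ for every $k\in\mathcal K$. (4) For every potentially basic activity $j=(i,k)$ one has $y^*_i\mu_j=z^*_k$. (5) For every always nonbasic activity $j=(i,k)$ one has $y^*_i\mu_j<z^*_k$. (6) For every class $i\in\mathcal I$ there exists a potentially basic activity $j\in\mathcal J_i$. (7) $y^*_i>0$ for every $i\in\mathcal I$.
   Context: Let $\mathcal I$ (classes) and $\mathcal K$ (servers) be finite sets of cardinalities $I$ and $K$, and let $\mathcal J\subset\mathcal I\times\mathcal K$ (activities) have cardinality $J$. For $i\in\mathcal I$ let $\mathcal J_i=\{(i,k)\in\mathcal J\}$ and for $k\in\mathcal K$ let $\mathcal J^k=\{(i,k)\in\mathcal J\}$. Let $\lambda\in(0,\infty)^I$ and $\mu\in(0,\infty)^{\mathcal J}$. Let $R$ be the $I\times J$ matrix with $R_{ij}=\mu_j$ if $j\in\mathcal J_i$ and $R_{ij}=0$ otherwise, and $G$ the $K\times J$ matrix with $G_{kj}=1$ if $j\in\mathcal J^k$ and $0$ otherwise. The LP is: minimize $\rho$ over $(\xi,\rho)\in\mathbb R^J\times\mathbb R$ subject to $R\xi=\lambda$, $G\xi\le\rho 1_K$, $\xi\ge0$. The dual problem is: maximize $y\cdot\lambda$ over $(y,z)\in\mathbb R^I\times\mathbb R^K$ subject to $\sum_k z_k=1$,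 $yR\le zG$, $z\ge 0$. Standing assumption: (i) the optimal value of the LP is $\rho^*=1$; (ii) letting $\mathcal S_{\mathrm{LP}}=\{\xi:(\xi,1)\text{ is an optimal solution of the LP}\}$, every $\xi\in\mathcal S_{\mathrm{LP}}$ satisfies $(G\xi)_k=1$ for all $k\in\mathcal K$; (iii) the dual problem has a unique solution $(y^*,z^* )$. An activity $j$ is potentially basic if $\xi_j>0$ for some $\xi\in\mathcal S_{\mathrm{LP}}$, and always nonbasic otherwise. *)

(* Defs.v *)
From mathcomp Require Import all_boot all_order all_algebra.
Set Implicit Arguments. Unset Strict Implicit. Unset Printing Implicit Defensive.
Import Order.TTheory GRing.Theory Num.Theory.
Local Open Scope ring_scope.

(* Network data: classes I, servers K, activities J, where each activity j
   is the pair (cls j, srv j) in I x K; the map j |-> (cls j, srv j) is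
   injective, so J is identified with a subset of I x K.
   The matrix R has R_{ij} = mu_j if j in J_i (cls j = i), 0 otherwise;
   G has G_{kj} = 1 if j in J^k (srv j = k), 0 otherwise. *)
Section LP.
Variables (R : realFieldType) (I K J : finType) (cls : J -> I) (srv : J -> K)
  (lam : I -> R) (mu : J -> R).

Definition Rmul (xi : J -> R) (i : I) : R := \sum_(j | cls j == i) mu j * xi j.
Definition Gmul (xi : J -> R) (k : K) : R := \sum_(j | srv j == k) xi j.

Definition lp_feasible (xi : J -> R) (rho : R) : Prop :=
  [/\ forall i, Rmul xi i = lam i,
      forall k, Gmul xi k <= rho
    & forall j, 0 <= xi j].

Definition lp_optimal (xi : J -> R) (rho : R) : Prop :=
  lp_feasible xi rho /\ forall xi' rho', lp_feasible xi' rho' -> rho <= rho'.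

Definition lp_value_is (v : R) : Prop := exists xi, lp_optimal xi v.

Definition S_LP (xi : J -> R) : Prop := lp_optimal xi 1.

Definition dual_feasible (y : I -> R) (z : K -> R) : Prop :=
  [/\ \sum_k z k = 1,
      forall j, y (cls j) * mu j <= z (srv j)
    & forall k, 0 <= z k].

Definition dual_obj (y : I -> R) : R := \sum_i y i * lam i.

Definition dual_optimal (y : I -> R) (z : K -> R) : Prop :=
  dual_feasible y z /\
  forall y' z', dual_feasible y' z' -> dual_obj y' <= dual_obj y.

Definition potentially_basic (j : J) : Prop := exists xi, S_LP xi /\ 0 < xi j.
Definition always_nonbasic (j : J) : Prop := ~ potentially_basic j.

End LP.

Section Convex.
Variables (R : realFieldType) (J : finType).

Definition extreme_point (S : (J -> R) -> Prop) (x : J -> R) : Prop :=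
  S x /\
  forall a b (t : R), S a -> S b -> 0 < t -> t < 1 ->
    (forall j, x j = t * a j + (1 - t) * b j) ->
    (forall j, a j = x j) /\ (forall j, b j = x j).

Definition in_conv_hull (M : nat) (pts : 'I_M -> J -> R) (x : J -> R) : Prop :=
  exists w : 'I_M -> R,
    [/\ forall m, 0 <= w m, \sum_m w m = 1
      & forall j, x j = \sum_m w m * pts m j].
End Convex.

(* Main.v *)
Require Import Defs.
From mathcomp Require Import all_boot all_order all_algebra.
From mathcomp Require Import ring lra.
From Stdlib Require Classical_Prop ClassicalEpsilon.
Set Implicit Arguments. Unset Strict Implicit. Unset Printing Implicit Defensive.
Import Order.TTheory GRing.Theory Num.Theory.
Local Open Scope ring_scope.


Section Farkas.
Variables (R : realFieldType).

Lemma fin_min (T : finType) (P : pred T) (F : T -> R) j1 :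
  P j1 -> exists2 j0, P j0 & forall j, P j -> F j0 <= F j.
Proof.
move=> Pj1; case: (arg_minP F Pj1) => j0 Pj0 H; exists j0 => //.
Qed.

Lemma sum_delta (T : finType) (p : T) (F : T -> R) :
  \sum_l (l == p)%:R * F l = F p.
Proof.
rewrite (bigD1 p) //= eqxx mul1r big1 ?addr0 // => l /negbTE ->; by rewrite mul0r.
Qed.

Lemma sep_seq (lo hi : seq R) :
  (forall p, p \in lo -> forall q, q \in hi -> p <= q) ->
  exists t, (forall p, p \in lo -> p <= t) /\ (forall q, q \in hi -> t <= q).
Proof.
elim: lo => [|a lo IH] H.
  elim: hi {H} => [|b hi [t [_ Ht]]]; first by exists 0.
  exists (Num.min b t); split => // q; rewrite inE => /orP [/eqP -> | /Ht].
    by rewrite ge_min lexx.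
  by move=> tq; rewrite ge_min tq orbT.
case: IH => [p pin q qin|t [H1 H2]]; first by apply: H => //; rewrite inE pin orbT.
exists (Num.max a t); split.
  move=> p; rewrite inE => /orP [/eqP -> | /H1 pt]; first by rewrite le_max lexx.
  by rewrite le_max pt orbT.
move=> q qin; rewrite ge_max H2 // andbT; apply: H => //; by rewrite inE eqxx.
Qed.

Variable V : finType.

Definition fval (L : finType) (a : L -> V -> R) (c : L -> R) (l : L) (x : V -> R) :=
  \sum_v a l v * x v + c l.

Definition farkas_cert (L : finType) (a : L -> V -> R) (c : L -> R) :=
  exists u : L -> R, [/\ forall l, 0 <= u l, forall v, \sum_l u l * a l v = 0
                       & \sum_l u l * c l < 0].

Lemma farkas_base (L : finType) (a : L -> V -> R) (c : L -> R) :
  (forall l v, a l v = 0) ->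
  ~ (exists x, forall l, 0 <= fval a c l x) -> farkas_cert a c.
Proof.
move=> a0 nf; case: (boolP [exists l, c l < 0]) => [/existsP [l cl]|].
  exists (fun l' => (l' == l)%:R); split.
  - by move=> l'; rewrite ler0n.
  - by move=> v; rewrite sum_delta.
  - by rewrite sum_delta.
move=> /existsPn H; exfalso; apply: nf; exists (fun _ => 0) => l.
rewrite /fval big1 ?add0r; last by move=> v _; rewrite mulr0.
by move: (H l); rewrite -leNgt.
Qed.

Lemma farkas_ind n : forall (A : {set V}) (L : finType) (a : L -> V -> R) (c : L -> R),
  (#|A| <= n)%N -> (forall l v, v \notin A -> a l v = 0) ->
  ~ (exists x, forall l, 0 <= fval a c l x) -> farkas_cert a c.
Proof.
elim: n => [|n IH] A L a c cA aA nf.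
  apply: farkas_base nf => l v; apply: aA.
  by move: cA; rewrite leqn0 => /eqP/cards0_eq ->; rewrite inE.
have [A0|/set0Pn [v0 v0A]] := eqVneq A set0.
  by apply: farkas_base nf => l v; apply: aA; rewrite A0 inE.
pose L' := (L + (L * L))%type.
pose w (l' : L') (l2 : L) : R :=
  match l' with
  | inl l => if a l v0 == 0 then (l2 == l)%:R else 0
  | inr pq => if (0 < a pq.1 v0) && (a pq.2 v0 < 0) then
       (- a pq.2 v0) * (l2 == pq.1)%:R + a pq.1 v0 * (l2 == pq.2)%:R else 0
  end.
pose a' (l' : L') v := \sum_l2 w l' l2 * a l2 v.
pose c' (l' : L') := \sum_l2 w l' l2 * c l2.
have fv' : forall l' x, fval a' c' l' x = \sum_l2 w l' l2 * fval a c l2 x.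
  move=> l' x; rewrite /fval /a' /c'.
  under eq_bigr do rewrite mulr_suml.
  rewrite exchange_big /= -big_split /=; apply: eq_bigr => l2 _.
  by rewrite mulrDr mulr_sumr; congr (_ + _); apply: eq_bigr => v _; rewrite mulrA.
have w0 : forall l' l2, 0 <= w l' l2.
  case=> [l|[p q]] l2; rewrite /w /=; first by case: ifP; rewrite ?ler0n.
  case: ifP => [/andP [pp qn]|]//; apply: addr_ge0; apply: mulr_ge0; rewrite ?ler0n //.
  + by rewrite oppr_ge0 ltW.
  + by rewrite ltW.
have a'v0 : forall l', a' l' v0 = 0.
  case=> [l|[p q]]; rewrite /a' /w /=.
    have [al|al] := eqVneq (a l v0) 0; first by rewrite sum_delta.
    by rewrite big1 // => *; rewrite mul0r.
  case: (boolP ((0 < a p v0) && (a q v0 < 0))) => H;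
    last by rewrite big1 // => *; rewrite mul0r.
  under eq_bigr do rewrite mulrDl -!mulrA.
  rewrite big_split /= -!mulr_sumr !sum_delta /=; ring.
have a'A : forall l' v, v \notin A :\ v0 -> a' l' v = 0.
  move=> l' v; rewrite !inE negb_and negbK => /orP [/eqP -> //|vA].
  by rewrite /a' big1 // => l2 _; rewrite aA // mulr0.
have cA' : (#|A :\ v0| <= n)%N by move: cA; rewrite (cardsD1 v0) v0A.
case: (Classical_Prop.classic (exists x, forall l', 0 <= fval a' c' l' x)) => feas.
  exfalso; apply: nf; case: feas => x' Hx'.
  pose x0 := fun v => if v == v0 then 0 else x' v.
  pose g := fun l => fval a c l x0.
  have Hx0 : forall l', 0 <= fval a' c' l' x0.
    move=> l'; suff -> : fval a' c' l' x0 = fval a' c' l' x' by [].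
    rewrite /fval; congr (_ + _); apply: eq_bigr => v _; rewrite /x0.
    by case: eqP => [->|//]; rewrite a'v0 !mul0r.
  have gt : forall l t, fval a c l (fun v => if v == v0 then t else x' v) = g l + a l v0 * t.
    move=> l t; rewrite /g /fval addrAC; congr (_ + _).
    rewrite (bigD1 v0) //= (bigD1 v0 (P := predT)) //= /x0 eqxx mulr0 add0r addrC.
    by congr (_ + _); apply: eq_bigr => v /negbTE ->.
  pose lo := [seq - g l / a l v0 | l <- enum L & 0 < a l v0].
  pose hi := [seq - g l / a l v0 | l <- enum L & a l v0 < 0].
  case: (@sep_seq lo hi).
    move=> x1 /mapP [p]; rewrite mem_filter => /andP [pp _] -> x2 /mapP [q].
    rewrite mem_filter => /andP [qn _] ->.
    have := Hx0 (inr (p, q)); rewrite fv' /w /= pp qn /=.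
    under eq_bigr do rewrite mulrDl -!mulrA.
    rewrite big_split /= -!mulr_sumr !sum_delta -/(g p) -/(g q) => H.
    rewrite ler_ndivlMr // mulrAC ler_pdivlMr //; lra.
  move=> t [Hlo Hhi]; exists (fun v => if v == v0 then t else x' v) => l.
  rewrite gt; case: (ltgtP (a l v0) 0) => al.
  - have : t <= - g l / a l v0 by apply: Hhi; apply: map_f; rewrite mem_filter al mem_enum.
    rewrite ler_ndivlMr // => H; lra.
  - have : - g l / a l v0 <= t by apply: Hlo; apply: map_f; rewrite mem_filter al mem_enum.
    rewrite ler_pdivrMr // => H; lra.
  - have := Hx0 (inl l); rewrite fv' /w /= al eqxx sum_delta -/(g l) => H.
    by rewrite mul0r addr0.
case: (IH (A :\ v0) L' a' c' cA' a'A feas) => u' [u'0 u'a u'c].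
exists (fun l2 => \sum_l' u' l' * w l' l2); split.
- by move=> l2; apply: sumr_ge0 => l' _; apply: mulr_ge0.
- move=> v; rewrite -[RHS](u'a v).
  transitivity (\sum_l2 \sum_l' u' l' * w l' l2 * a l2 v).
    by apply: eq_bigr => l2 _; rewrite mulr_suml.
  rewrite exchange_big /=; apply: eq_bigr => l' _; rewrite /a' mulr_sumr.
  by apply: eq_bigr => l2 _; rewrite mulrA.
- apply: le_lt_trans u'c; rewrite le_eqVlt; apply/orP; left; apply/eqP.
  transitivity (\sum_l2 \sum_l' u' l' * w l' l2 * c l2).
    by apply: eq_bigr => l2 _; rewrite mulr_suml.
  rewrite exchange_big /=; apply: eq_bigr => l' _; rewrite /c' mulr_sumr.
  by apply: eq_bigr => l2 _; rewrite mulrA.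
Qed.

Lemma farkas (L : finType) (a : L -> V -> R) (c : L -> R) :
  ~ (exists x, forall l, 0 <= fval a c l x) -> farkas_cert a c.
Proof. by apply: (@farkas_ind #|[set: V]| setT) => // l v; rewrite inE. Qed.

End Farkas.


Section Basics.
Variables (R : realFieldType) (I K J : finType) (cls : J -> I) (srv : J -> K)
  (lam : I -> R) (mu : J -> R).

Lemma Rmul_lin (al be : R) x x' i :
  Rmul cls mu (fun j => al * x j + be * x' j) i = al * Rmul cls mu x i + be * Rmul cls mu x' i.
Proof.
rewrite /Rmul !mulr_sumr -big_split /=; apply: eq_bigr => j _; ring.
Qed.

Lemma Gmul_lin (al be : R) x x' k :
  Gmul srv (fun j => al * x j + be * x' j) k = al * Gmul srv x k + be * Gmul srv x' k.
Proof.
rewrite /Gmul !mulr_sumr -big_split /=; apply: eq_bigr => j _; ring.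
Qed.

Lemma Rmul_scale (al : R) x i : Rmul cls mu (fun j => al * x j) i = al * Rmul cls mu x i.
Proof. rewrite /Rmul mulr_sumr; apply: eq_bigr => j _; ring. Qed.

Lemma Gmul_scale (al : R) x k : Gmul srv (fun j => al * x j) k = al * Gmul srv x k.
Proof. by rewrite /Gmul mulr_sumr. Qed.

Lemma Rmul_sum (M : nat) (w : 'I_M -> R) (P : 'I_M -> J -> R) i :
  Rmul cls mu (fun j => \sum_m w m * P m j) i = \sum_m w m * Rmul cls mu (P m) i.
Proof.
rewrite /Rmul; under [RHS]eq_bigr do rewrite mulr_sumr.
rewrite [RHS]exchange_big /=; apply: eq_bigr => j _.
rewrite mulr_sumr; apply: eq_bigr => m _; ring.
Qed.

Lemma Gmul_sum (M : nat) (w : 'I_M -> R) (P : 'I_M -> J -> R) k :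
  Gmul srv (fun j => \sum_m w m * P m j) k = \sum_m w m * Gmul srv (P m) k.
Proof.
rewrite /Gmul; under [RHS]eq_bigr do rewrite mulr_sumr.
by rewrite [RHS]exchange_big.
Qed.

Lemma Rmul_delta j0 i : Rmul cls mu (fun j => (j == j0)%:R) i = (cls j0 == i)%:R * mu j0.
Proof.
rewrite /Rmul big_mkcond /=.
transitivity (\sum_j (j == j0)%:R * (if cls j == i then mu j else 0)).
  by apply: eq_bigr => j _; case: ifP; rewrite ?mulr0 ?mul0r // mulrC.
by rewrite sum_delta; case: ifP; rewrite ?mul1r ?mul0r.
Qed.

Lemma Gmul_delta j0 k : Gmul srv (fun j => (j == j0)%:R) k = (srv j0 == k)%:R :> R.
Proof.
rewrite /Gmul big_mkcond /=.
transitivity (\sum_j (j == j0)%:R * (if srv j == k then 1 else 0 : R)).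
  by apply: eq_bigr => j _; case: ifP; rewrite ?mulr0 ?mul0r ?mulr1.
by rewrite sum_delta; case: ifP.
Qed.

Lemma Gmul_ge (x : J -> R) j : (forall j, 0 <= x j) -> x j <= Gmul srv x (srv j).
Proof.
move=> x0; rewrite /Gmul (bigD1 j) //= lerDl; apply: sumr_ge0 => *; exact: x0.
Qed.

Lemma Gmul_ge0 (x : J -> R) k : (forall j, 0 <= x j) -> 0 <= Gmul srv x k.
Proof. move=> x0; apply: sumr_ge0 => *; exact: x0. Qed.

Lemma dualR (y : I -> R) xi :
  \sum_i y i * Rmul cls mu xi i = \sum_j y (cls j) * (mu j * xi j).
Proof.
rewrite (partition_big cls predT) //=; apply: eq_bigr => i _.
rewrite /Rmul mulr_sumr; apply: eq_bigr => j /eqP ->; done.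
Qed.

Lemma dualG (z : K -> R) (xi : J -> R) :
  \sum_k z k * Gmul srv xi k = \sum_j z (srv j) * xi j.
Proof.
rewrite (partition_big srv predT) //=; apply: eq_bigr => k _.
rewrite /Gmul mulr_sumr; apply: eq_bigr => j /eqP ->; done.
Qed.

Lemma Kne (z : K -> R) : \sum_k z k = 1 -> exists k : K, True.
Proof.
case: (pickP (@predT K)) => [k _|H]; first by exists k.
rewrite big_pred0 // => /eqP; by rewrite eq_sym oner_eq0.
Qed.

Definition hom_sys (ey : I -> R) (ez : K -> R) (y : I -> R) (z : K -> R) :=
  [/\ forall k, 0 <= z k, forall j, y (cls j) * mu j <= z (srv j),
      \sum_k z k <= \sum_i y i * lam i
    & 1 <= \sum_i ey i * y i + \sum_k ez k * z k].

Lemma hom_dual (ey : I -> R) (ez : K -> R) :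
  ~ (exists y z, hom_sys ey ez y z) ->
  exists xi t p s, [/\ forall j, 0 <= xi j, 0 <= t, forall k, 0 <= p k & 0 < s] /\
     (forall i, Rmul cls mu xi i = t * lam i + s * ey i) /\
     (forall k, Gmul srv xi k = t - p k - s * ez k).
Proof.
move=> nf.
pose V := (I + K)%type.
pose L := (K + (J + bool))%type.
pose a (l : L) (v : V) : R :=
  match l, v with
  | inl k, inl _ => 0
  | inl k, inr k' => (k' == k)%:R
  | inr (inl j), inl i => (i == cls j)%:R * - mu j
  | inr (inl j), inr k => (k == srv j)%:R
  | inr (inr true), inl i => lam i
  | inr (inr true), inr k => -1
  | inr (inr false), inl i => ey i
  | inr (inr false), inr k => ez k
  end.
pose c (l : L) : R := if l is inr (inr false) then -1 else 0.
have [] := @farkas R V L a c.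
  move=> [x Hx]; apply: nf; exists (fun i => x (inl i)), (fun k => x (inr k)); split.
  - move=> k; have := Hx (inl k); rewrite /fval big_sumType /= big1 ?add0r ?addr0;
      last by move=> *; rewrite mul0r.
    by rewrite sum_delta.
  - move=> j; have := Hx (inr (inl j)); rewrite /fval big_sumType /= addr0.
    under eq_bigr do rewrite -mulrA.
    rewrite !sum_delta; lra.
  - have := Hx (inr (inr true)); rewrite /fval big_sumType /= addr0.
    under eq_bigr do rewrite mulrC.
    under [X in _ + X]eq_bigr do rewrite mulN1r.
    rewrite sumrN; lra.
  - have := Hx (inr (inr false)); rewrite /fval big_sumType /=; lra.
move=> u [u0 ua uc].
exists (fun j => u (inr (inl j))), (u (inr (inr true))), (fun k => u (inl k)),
  (u (inr (inr false))); split; [split => // | split].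
- have := uc; rewrite big_sumType big_sumType big_bool /= big1; last by move=> *; rewrite mulr0.
  rewrite big1; last by move=> *; rewrite mulr0.
  lra.
- move=> i; have := ua (inl i); rewrite big_sumType big_sumType big_bool /= big1;
    last by move=> *; rewrite mulr0.
  suff -> : \sum_j u (inr (inl j)) * ((i == cls j)%:R * - mu j) =
            - Rmul cls mu (fun j => u (inr (inl j))) i by lra.
  rewrite /Rmul [in RHS]big_mkcond -sumrN /=; apply: eq_bigr => j _.
  rewrite eq_sym; case: ifP => _ /=; ring.
- move=> k; have := ua (inr k); rewrite big_sumType big_sumType big_bool /=.
  under eq_bigr do rewrite mulrC eq_sym.
  rewrite sum_delta.
  suff -> : \sum_j u (inr (inl j)) * (k == srv j)%:R =
            Gmul srv (fun j => u (inr (inl j))) k by lra.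
  rewrite /Gmul [in RHS]big_mkcond /=; apply: eq_bigr => j _.
  rewrite eq_sym; case: ifP => _ /=; ring.
Qed.

End Basics.


Section Dual.
Variables (R : realFieldType) (I K J : finType) (cls : J -> I) (srv : J -> K)
  (lam : I -> R) (mu : J -> R) (xi0 : J -> R) (ys : I -> R) (zs : K -> R).
Hypotheses (hlam : forall i, 0 < lam i) (hmu : forall j, 0 < mu j)
  (hopt : lp_optimal cls srv lam mu xi0 1)
  (HG : forall xi, S_LP cls srv lam mu xi -> forall k, Gmul srv xi k = 1)
  (hdo : dual_optimal cls srv lam mu ys zs)
  (huniq : forall y z, dual_optimal cls srv lam mu y z ->
     (forall i, y i = ys i) /\ (forall k, z k = zs k)).

Lemma S_iff xi : S_LP cls srv lam mu xi <-> lp_feasible cls srv lam mu xi 1.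
Proof. split; [by case | move=> h; split=> //; case: hopt => _; exact]. Qed.

Lemma weak y z : dual_feasible cls srv mu y z -> dual_obj lam y <= 1.
Proof.
case=> zsum yz z0; case: hopt => [[hR hGx h0] _].
rewrite /dual_obj; under eq_bigr => i _ do rewrite -hR.
rewrite dualR (@le_trans _ _ (\sum_j z (srv j) * xi0 j)) //.
  by apply: ler_sum => j _; rewrite mulrA; apply: ler_wpM2r.
rewrite -dualG -zsum; apply: ler_sum => k _.
by rewrite -[X in _ <= X]mulr1; apply: ler_wpM2l.
Qed.

Lemma obj1 : dual_obj lam ys = 1.
Proof.
apply: le_anti; apply/andP; split; first by case: hdo => f _; exact: weak f.
case: (Classical_Prop.classic (exists y z, hom_sys cls srv lam mu (fun _ => 0) (fun _ => 1) y z)).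
  move=> [y' [z' [z'0 yz' obj' ext']]].
  pose N := \sum_k z' k.
  have N1 : 1 <= N.
    move: ext'; rewrite big1 ?add0r; last by move=> *; rewrite mul0r.
    by under eq_bigr do rewrite mul1r.
  have N0 : N != 0 by apply/eqP => N0; move: N1; rewrite N0; lra.
  apply: (@le_trans _ _ (dual_obj lam (fun i => y' i / N))); last first.
    case: hdo => _ /(_ _ (fun k => z' k / N)); apply; split.
    - by rewrite /= -mulr_suml divff.
    - move=> j /=; rewrite mulrAC; apply: ler_wpM2r => //; rewrite invr_ge0; lra.
    - move=> k /=; apply: divr_ge0 => //; lra.
  rewrite /dual_obj; under eq_bigr do rewrite mulrAC.
  rewrite -mulr_suml ler_pdivlMr; last lra.
  by rewrite mul1r.
move=> nf; case: (hom_dual nf) => xi [t [p [s [[xi0' t0 p0 s0] [hR hG]]]]].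
case: hdo => [[zsum _ _] _]; case: (Kne zsum) => k _.
move: (t0); rewrite le0r => /orP [/eqP t0'|tp].
  have := Gmul_ge0 srv k xi0'; rewrite hG t0'; have := p0 k; lra.
have tn : t != 0 by apply/eqP => e; move: tp; rewrite e ltxx.
case: hopt => _ /(_ (fun j => t^-1 * xi j) (1 - s / t)).
have sp : 0 < s / t by apply: divr_gt0.
have H : 1 <= 1 - s / t -> False by lra.
move=> H2; exfalso; apply: H; apply: H2; split.
- move=> i; rewrite Rmul_scale hR; field; done.
- move=> k'; rewrite Gmul_scale hG.
  have e : t^-1 * (t - p k' - s * 1) = 1 - s / t - p k' / t by field.
  rewrite e; have : 0 <= p k' / t by apply: divr_ge0 => //; apply: ltW.
  lra.
- by move=> j; apply: mulr_ge0 => //; rewrite invr_ge0 ltW.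
Qed.

Lemma comb ey ez y' z' : hom_sys cls srv lam mu ey ez y' z' ->
  (forall i, ys i = (ys i + y' i) / (1 + \sum_k z' k)) /\
  (forall k, zs k = (zs k + z' k) / (1 + \sum_k z' k)).
Proof.
move=> [z'0 yz' obj' _].
set N := 1 + \sum_k z' k.
have N1 : 1 <= N by rewrite /N lerDl; apply: sumr_ge0 => *; exact: z'0.
have N0 : N != 0 by apply/eqP => N0; move: N1; rewrite N0; lra.
case: hdo => [[zsum yzs zs0] opt].
have hop : dual_optimal cls srv lam mu (fun i => (ys i + y' i) / N) (fun k => (zs k + z' k) / N).
  split; first split.
  - by rewrite /= -mulr_suml big_split /= zsum divff.
  - move=> j /=; rewrite mulrAC; apply: ler_wpM2r; first by rewrite invr_ge0; lra.
    rewrite mulrDl; apply: lerD => //.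
  - move=> k /=; apply: divr_ge0; last lra.
    by apply: addr_ge0.
  - move=> y'' z'' f''; apply: (le_trans (weak f'')).
    rewrite /dual_obj; under eq_bigr do rewrite mulrAC.
    rewrite -mulr_suml ler_pdivlMr; last lra.
    rewrite mul1r; under eq_bigr do rewrite mulrDl.
    rewrite big_split /=; have := obj1; rewrite /dual_obj => ->.
    by rewrite /N lerD2l.
have [h1 h2] := huniq hop.
by split => [i|k]; [rewrite h1 | rewrite h2].
Qed.

Lemma zpos k0 : 0 < zs k0.
Proof.
case: hdo => [[zsum yzs zs0] opt].
case: (Classical_Prop.classic (exists y z, hom_sys cls srv lam mu (fun _ => 0) (fun k => (k == k0)%:R) y z)).
  move=> [y' [z' hs]]; have [_ h2] := comb hs.
  case: hs => z'0 _ _; rewrite big1 ?add0r; last by move=> *; rewrite mul0r.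
  rewrite sum_delta => ext.
  have N1 : 1 <= 1 + \sum_k z' k by rewrite lerDl; apply: sumr_ge0 => *; exact: z'0.
  rewrite h2; apply: divr_gt0; last lra.
  have := zs0 k0; lra.
move=> nf; case: (hom_dual nf) => xi [t [p [s [[xi0' t0 p0 s0] [hR hG]]]]].
move: (t0); rewrite le0r => /orP [/eqP t0'|tp].
  have := Gmul_ge0 srv k0 xi0'; rewrite hG t0' eqxx /=; have := p0 k0; lra.
have tn : t != 0 by apply/eqP => e; move: tp; rewrite e ltxx.
pose x := fun j => t^-1 * xi j.
have Sx : S_LP cls srv lam mu x.
  apply/S_iff; split.
  - move=> i; rewrite Rmul_scale hR; field; done.
  - move=> k'; rewrite Gmul_scale hG.
    have e : t^-1 * (t - p k' - s * (k' == k0)%:R) = 1 - (p k' + s * (k' == k0)%:R) / t by field.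
    rewrite e; have : 0 <= (p k' + s * (k' == k0)%:R) / t.
      apply: divr_ge0; last exact: ltW.
      by apply: addr_ge0 => //; apply: mulr_ge0; rewrite ?ler0n ?ltW.
    lra.
  - by move=> j; apply: mulr_ge0 => //; rewrite invr_ge0 ltW.
have := HG Sx k0; rewrite /x Gmul_scale hG eqxx.
have e : t^-1 * (t - p k0 - s * 1%:R) = 1 - p k0 / t - s / t by field.
rewrite e; have : 0 <= p k0 / t by apply: divr_ge0 => //; apply: ltW.
have : 0 < s / t by apply: divr_gt0.
lra.
Qed.

Lemma slack j0 : always_nonbasic cls srv lam mu j0 -> ys (cls j0) * mu j0 < zs (srv j0).
Proof.
move=> nb; case: hdo => [[zsum yzs zs0] opt].
case: (Classical_Prop.classic (exists y z, hom_sys cls srv lam mu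
   (fun i => (i == cls j0)%:R * - mu j0) (fun k => (k == srv j0)%:R) y z)).
  move=> [y' [z' hs]]; have [h1 h2] := comb hs.
  case: hs => z'0 yz' _; under eq_bigr do rewrite -mulrA.
  rewrite !sum_delta => ext.
  set N := 1 + \sum_k z' k in h1 h2.
  have N1 : 1 <= N by rewrite /N lerDl; apply: sumr_ge0 => *; exact: z'0.
  have N0 : N != 0 by apply/eqP => N0; move: N1; rewrite N0; lra.
  have ea : ys (cls j0) * N = ys (cls j0) + y' (cls j0) by rewrite {1}h1 divfK.
  have eb : zs (srv j0) * N = zs (srv j0) + z' (srv j0) by rewrite {1}h2 divfK.
  have := yzs j0; have := hmu j0.
  have e2 : (zs (srv j0) - ys (cls j0) * mu j0) * N =
            (zs (srv j0) - ys (cls j0) * mu j0) + (z' (srv j0) - y' (cls j0) * mu j0).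
    by rewrite mulrBl mulrAC eb ea; ring.
  move=> _ H; have : 0 < (zs (srv j0) - ys (cls j0) * mu j0) * N by rewrite e2; lra.
  rewrite pmulr_lgt0; last lra.
  lra.
move=> nf; case: (hom_dual nf) => xi [t [p [s [[xi0' t0 p0 s0] [hR hG]]]]].
pose x2 := fun j => 1 * xi j + s * (j == j0)%:R.
have hR2 : forall i, Rmul cls mu x2 i = t * lam i.
  move=> i; rewrite Rmul_lin Rmul_delta hR eq_sym; ring.
have hG2 : forall k, Gmul srv x2 k = t - p k.
  move=> k; rewrite Gmul_lin Gmul_delta hG eq_sym; ring.
have x20 : forall j, 0 <= x2 j.
  move=> j; apply: addr_ge0; rewrite ?mul1r //; apply: mulr_ge0; rewrite ?ler0n ?ltW //.
have x2j0 : 0 < x2 j0 by rewrite /x2 eqxx /= mul1r mulr1; have := xi0' j0; lra.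
move: (t0); rewrite le0r => /orP [/eqP t0'|tp].
  have := Gmul_ge srv j0 x20; rewrite hG2 t0'; have := p0 (srv j0); lra.
have tn : t != 0 by apply/eqP => e; move: tp; rewrite e ltxx.
exfalso; apply: nb; exists (fun j => t^-1 * x2 j); split; last first.
  by apply: mulr_gt0 => //; rewrite invr_gt0.
apply/S_iff; split.
- move=> i; rewrite Rmul_scale hR2; field; done.
- move=> k'; rewrite Gmul_scale hG2.
  have e : t^-1 * (t - p k') = 1 - p k' / t by field.
  rewrite e; have : 0 <= p k' / t by apply: divr_ge0 => //; apply: ltW.
  lra.
- by move=> j; apply: mulr_ge0 => //; rewrite invr_ge0 ltW.
Qed.

Lemma cslack j : potentially_basic cls srv lam mu j -> ys (cls j) * mu j = zs (srv j).
Proof.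
move=> [xi [Sxi xj]]; case: hdo => [[zsum yzs zs0] opt].
have [hR hGx h0] := (S_iff xi).1 Sxi.
have H : \sum_j' (zs (srv j') - ys (cls j') * mu j') * xi j' = 0.
  under eq_bigr do rewrite mulrBl -mulrA.
  rewrite sumrB -dualG -dualR.
  under eq_bigr do rewrite (HG Sxi) mulr1.
  under [X in _ - X]eq_bigr do rewrite hR.
  by have := obj1; rewrite /dual_obj zsum => ->; rewrite subrr.
have := psumr_eq0P (P := predT) _ H (i := j) isT.
  move=> /(_ _)/eqP; rewrite mulf_eq0 (gt_eqF xj) orbF subr_eq0 => h.
  by apply/esym/eqP; apply: h => j' _; apply: mulr_ge0; rewrite ?subr_ge0.
Qed.

Lemma basic_exists i : exists j, cls j = i /\ potentially_basic cls srv lam mu j.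
Proof.
have Sx0 : S_LP cls srv lam mu xi0 by case: hopt.
have [hR hGx h0] := (S_iff xi0).1 Sx0.
case: (boolP [exists j, (cls j == i) && (0 < xi0 j)]) => [/existsP [j /andP [/eqP ci xj]]|].
  by exists j; split => //; exists xi0.
move=> /existsPn H; exfalso; have := hlam i; rewrite -hR /Rmul big1 ?ltxx // => j ci.
have := H j; rewrite ci /= => /negbTE xj.
have : xi0 j == 0 by rewrite eq_le h0 andbT leNgt xj.
by move/eqP ->; rewrite mulr0.
Qed.

Lemma ypos i : 0 < ys i.
Proof.
case: (basic_exists i) => j [<- pb].
by have := zpos (srv j); rewrite -(cslack pb) pmulr_lgt0.
Qed.

End Dual.


Section Ext.
Variables (R : realFieldType) (I K J : finType) (cls : J -> I) (srv : J -> K)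
  (lam : I -> R) (mu : J -> R) (xi0 : J -> R).
Hypotheses (hopt : lp_optimal cls srv lam mu xi0 1)
  (HG : forall xi, S_LP cls srv lam mu xi -> forall k, Gmul srv xi k = 1).

Let S := S_LP cls srv lam mu.

Definition supp (x : J -> R) := [set j | x j != 0].

Lemma S_iff' xi : S xi <-> lp_feasible cls srv lam mu xi 1.
Proof. split; [by case | move=> h; split=> //; case: hopt => _; exact]. Qed.

Lemma Rmul_sub (a x : J -> R) i : Rmul cls mu (fun j => a j - x j) i = Rmul cls mu a i - Rmul cls mu x i.
Proof. rewrite /Rmul -sumrB; apply: eq_bigr => j _; ring. Qed.
Lemma Gmul_sub (a x : J -> R) k : Gmul srv (fun j => a j - x j) k = Gmul srv a k - Gmul srv x k.
Proof. by rewrite /Gmul -sumrB. Qed.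
Lemma Rmul_opp (d : J -> R) i : Rmul cls mu (fun j => - d j) i = - Rmul cls mu d i.
Proof. rewrite /Rmul -sumrN; apply: eq_bigr => j _; ring. Qed.
Lemma Gmul_opp (d : J -> R) k : Gmul srv (fun j => - d j) k = - Gmul srv d k.
Proof. by rewrite /Gmul -sumrN. Qed.

Lemma Rmul_as (x d : J -> R) al i : Rmul cls mu (fun j => x j + al * d j) i = Rmul cls mu x i + al * Rmul cls mu d i.
Proof. rewrite /Rmul mulr_sumr -big_split; apply: eq_bigr => j _ /=; ring. Qed.
Lemma Gmul_as (x d : J -> R) al k : Gmul srv (fun j => x j + al * d j) k = Gmul srv x k + al * Gmul srv d k.
Proof. by rewrite /Gmul mulr_sumr -big_split. Qed.

Lemma sign (d : J -> R) j0 : (forall k, Gmul srv d k = 0) -> d j0 != 0 -> exists j, d j < 0.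
Proof.
move=> Gd dj0; case: (boolP [exists j, d j < 0]) => [/existsP [j dj]|/existsPn H].
  by exists j.
have d0 : forall j, 0 <= d j by move=> j; rewrite leNgt H.
have := Gmul_ge srv j0 d0; rewrite Gd => h.
by move: dj0; rewrite eq_le h d0.
Qed.

Lemma move1 (x d : J -> R) : S x -> (forall j, x j = 0 -> d j = 0) -> (forall i, Rmul cls mu d i = 0) ->
  (forall k, Gmul srv d k = 0) -> (exists j, d j < 0) ->
  exists al, 0 < al /\ S (fun j => x j + al * d j) /\
     (#|supp (fun j => (x j + al * d j)%R)| < #|supp x|)%N.
Proof.
move=> Sx dx Rd Gd [j1 dj1].
have [hR hGx h0] := (S_iff' x).1 Sx.
have [js djs hmin] := @fin_min R J (fun j => d j < 0) (fun j => x j / - d j) j1 dj1.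
have xjs : x js != 0 by apply/eqP => /dx e; move: djs; rewrite e ltxx.
have xjsp : 0 < x js by rewrite lt_def xjs h0.
set al := x js / - d js.
have alp : 0 < al by apply: divr_gt0; lra.
exists al; split => //; split.
  apply/S_iff'; split.
  - by move=> i; rewrite Rmul_as Rd hR mulr0 addr0.
  - by move=> k; rewrite Gmul_as Gd mulr0 addr0.
  - move=> j; case: (ltP (d j) 0) => dj.
      have := hmin j dj; rewrite -/al ler_pdivlMr; last lra.
      move=> h; nra.
    by apply: addr_ge0 => //; apply: mulr_ge0 => //; apply: ltW.
apply: proper_card; apply/properP; split.
  apply/subsetP => j; rewrite !inE; apply: contraNN => /eqP xj.
  by rewrite xj (dx _ xj) mulr0 addr0.
exists js; rewrite !inE ?xjs //= negbK /al.
apply/eqP; field; lra.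
Qed.

Lemma twoway (x d : J -> R) j0 : S x -> (forall j, x j = 0 -> d j = 0) -> (forall i, Rmul cls mu d i = 0) ->
  (forall k, Gmul srv d k = 0) -> d j0 != 0 ->
  exists al be, [/\ 0 < al, 0 < be, S (fun j => x j + al * d j) &
     S (fun j => x j + be * - d j)] /\
     ((#|supp (fun j => (x j + al * d j)%R)| < #|supp x|)%N /\
     (#|supp (fun j => (x j + be * - d j)%R)| < #|supp x|)%N) /\
     forall j, x j = (be / (al + be)) * (x j + al * d j) + (1 - be / (al + be)) * (x j + be * - d j).
Proof.
move=> Sx dx Rd Gd dj0.
have [al [alp [S1 c1]]] := move1 Sx dx Rd Gd (sign Gd dj0).
have [||||be [bep [S2 c2]]] := @move1 x (fun j => - d j) Sx.
- by move=> j /dx ->; rewrite oppr0.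
- by move=> i; rewrite Rmul_opp Rd oppr0.
- by move=> k; rewrite Gmul_opp Gd oppr0.
- by apply: (@sign _ j0) => [k|]; [rewrite Gmul_opp Gd oppr0 | rewrite oppr_eq0].
exists al, be; split; first by split.
split; first by split.
move=> j; field; lra.
Qed.

Lemma ind_ext (Q : (J -> R) -> Prop) :
  (forall x, extreme_point S x -> Q x) ->
  (forall x x1 x2 t, Q x1 -> Q x2 -> 0 <= t -> t <= 1 ->
     (forall j, x j = t * x1 j + (1 - t) * x2 j) -> Q x) ->
  forall x, S x -> Q x.
Proof.
move=> Qe Qc.
suff H : forall n x, S x -> (#|supp x| < n)%N -> Q x.
  by move=> x Sx; apply: (H #|supp x|.+1).
elim=> [//|n IH] x Sx cx.
apply: Classical_Prop.NNPP => nq; apply: (nq); apply: Qe; split => // a b t Sa Sb t0 t1 hx.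
have [hRa hGa ha0] := (S_iff' a).1 Sa.
have [hRb hGb hb0] := (S_iff' b).1 Sb.
case: (boolP [forall j, a j == x j]) => [/forallP ha | /forallPn [j0 hj0]].
  split=> j; first by apply/eqP.
  have := hx j; rewrite (eqP (ha j)) => e.
  have : (1 - t) * (b j - x j) = 0 by lra.
  move/eqP; rewrite mulf_eq0 subr_eq0 => /orP [/eqP|/eqP //]; lra.
exfalso; apply: nq.
pose d := fun j => a j - x j.
have [||||al [be [[alp bep S1 S2] [[c1 c2] comb]]]] := @twoway x d j0 Sx.
- move=> j xj; have := hx j; rewrite xj => e.
  have := ha0 j; have := hb0 j => hb ha'.
  have hb' : 0 <= (1 - t) * b j by apply: mulr_ge0 => //; lra.
  have : t * a j <= 0 by lra.
  rewrite pmulr_rle0 // => al0; rewrite /d xj subr0; apply/eqP; rewrite eq_le al0 ha'.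
  done.
- have [hRx _ _] := (S_iff' x).1 Sx.
  by move=> i; rewrite Rmul_sub hRa hRx subrr.
- by move=> k; rewrite Gmul_sub (HG Sa) (HG Sx) subrr.
- by rewrite /d subr_eq0.
apply: (Qc x _ _ (be / (al + be)) (IH _ S1 _) (IH _ S2 _)) => //.
- exact: leq_trans c1 cx.
- exact: leq_trans c2 cx.
- apply: divr_ge0; lra.
- rewrite ler_pdivrMr; lra.
Qed.

Lemma ext_unique e e' : extreme_point S e -> S e' -> supp e' \subset supp e -> forall j, e' j = e j.
Proof.
move=> He Se' sub; have Se := He.1.
have [hRe hGe he0] := (S_iff' e).1 Se.
have [hRe' hGe' he0'] := (S_iff' e').1 Se'.
case: (boolP [forall j, e' j == e j]) => [/forallP h j|/forallPn [j0 hj0]]; first exact/eqP.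
exfalso; pose d := fun j => e' j - e j.
have [||||al [be [[alp bep S1 S2] [_ comb]]]] := @twoway e d j0 Se.
- move=> j ej; rewrite /d ej subr0; apply/eqP; apply: contraT => nz.
  have : j \in supp e by apply: (subsetP sub); rewrite inE.
  by rewrite inE ej eqxx.
- by move=> i; rewrite Rmul_sub hRe hRe' subrr.
- by move=> k; rewrite Gmul_sub (HG Se) (HG Se') subrr.
- by rewrite /d subr_eq0.
case: He => _ /(_ _ _ (be / (al + be)) S1 S2) [].
- apply: divr_gt0; lra.
- rewrite ltr_pdivrMr; lra.
- exact: comb.
move=> /(_ j0) => h; have : al * d j0 = 0 by lra.
move/eqP; rewrite mulf_eq0 (gt_eqF alp) /= /d subr_eq0.
by rewrite (negbTE hj0).
Qed.

Lemma ext_exists : exists e, extreme_point S e.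
Proof.
apply: (@ind_ext (fun _ => exists e, extreme_point S e) _ _ xi0).
- by move=> x hx; exists x.
- by move=> x x1 x2 t H1.
- by case: hopt.
Qed.

Definition Pset (A : {set J}) e :=
  extreme_point S e /\ (supp e = A \/ ~ (exists e', extreme_point S e' /\ supp e' = A)).

Definition pts (m : 'I_#|{set J}|) : J -> R :=
  ClassicalEpsilon.epsilon (inhabits (fun _ : J => 0 : R)) (Pset (enum_val m)).

Lemma pts_spec m : Pset (enum_val m) (pts m).
Proof.
apply: ClassicalEpsilon.epsilon_spec.
case: ext_exists => e0 He0.
case: (Classical_Prop.classic (exists e', extreme_point S e' /\ supp e' = enum_val m)).
  by move=> [e' [h1 h2]]; exists e'; split => //; left.
by move=> h; exists e0; split => //; right.
Qed.

Lemma part1 : exists (M : nat) (pts : 'I_M -> J -> R),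
        (forall m, extreme_point S (pts m)) /\
        (forall xi, S xi <-> in_conv_hull pts xi).
Proof.
exists #|{set J}|, pts; split; first by move=> m; case: (pts_spec m).
move=> xi; split.
  apply: ind_ext.
  - move=> x Hx; pose m := enum_rank (supp x).
    have [Pe [hs|hn]] := pts_spec m; last first.
      by exfalso; apply: hn; exists x; split => //; rewrite enum_rankK.
    have ex : forall j, x j = pts m j.
      apply: ext_unique => //; first by case: Hx.
      by rewrite hs /m enum_rankK.
    exists (fun m' => (m' == m)%:R); split.
    + by move=> m'; rewrite ler0n.
    + by rewrite (bigD1 m) //= eqxx big1 ?addr0 // => m' /negbTE ->.
    + by move=> j; rewrite sum_delta.
  - move=> x x1 x2 t [w1 [w10 w1s w1x]] [w2 [w20 w2s w2x]] t0 t1 hx.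
    exists (fun m => t * w1 m + (1 - t) * w2 m); split.
    + move=> m; apply: addr_ge0; apply: mulr_ge0 => //; lra.
    + by rewrite big_split /= -!mulr_sumr w1s w2s; ring.
    + move=> j; rewrite hx w1x w2x !mulr_sumr -big_split /=.
      by apply: eq_bigr => m _; ring.
move=> [w [w0 ws wx]]; apply/S_iff'; split.
- move=> i; rewrite /Rmul.
  transitivity (Rmul cls mu (fun j => \sum_m w m * pts m j) i).
    by apply: eq_bigr => j _; rewrite wx.
  rewrite Rmul_sum -[RHS]mulr1 -ws mulr_sumr; apply: eq_bigr => m _.
  have [hR _ _] := (S_iff' (pts m)).1 (pts_spec m).1.1.
  by rewrite hR mulrC.
- move=> k.
  have -> : Gmul srv xi k = Gmul srv (fun j => \sum_m w m * pts m j) k.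
    by apply: eq_bigr => j _; rewrite wx.
  rewrite Gmul_sum -ws; apply: ler_sum => m _.
  have [_ hG _] := (S_iff' (pts m)).1 (pts_spec m).1.1.
  by rewrite -[X in _ <= X]mulr1; apply: ler_wpM2l.
- by move=> j; rewrite wx; apply: sumr_ge0 => m _; apply: mulr_ge0 => //; case: (pts_spec m) => [[Sm _] _]; case: ((S_iff' _).1 Sm).
Qed.

End Ext.

Theorem lemma2p3 (R : realFieldType) (I K J : finType)
  (cls : J -> I) (srv : J -> K) (lam : I -> R) (mu : J -> R)
  (y_star : I -> R) (z_star : K -> R) :
  injective (fun j => (cls j, srv j)) ->
  (forall i, 0 < lam i) -> (forall j, 0 < mu j) ->
  (* (i) the optimal value of the LP is 1 *)
  lp_value_is cls srv lam mu 1 ->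
  (* (ii) every xi in S_LP has G xi = 1_K *)
  (forall xi, S_LP cls srv lam mu xi -> forall k, Gmul srv xi k = 1) ->
  (* (iii) the dual problem has the unique solution (y_star, z_star) *)
  dual_optimal cls srv lam mu y_star z_star ->
  (forall y z, dual_optimal cls srv lam mu y z ->
     (forall i, y i = y_star i) /\ (forall k, z k = z_star k)) ->
  (* (1) *) (
      exists (M : nat) (pts : 'I_M -> J -> R),
        (forall m, extreme_point (S_LP cls srv lam mu) (pts m)) /\
        (forall xi, S_LP cls srv lam mu xi <-> in_conv_hull pts xi)) /\
      (* (2) *) dual_obj lam y_star = 1 /\
      (* (3) *) (forall k, 0 < z_star k) /\
      (* (4) *) (forall j, potentially_basic cls srv lam mu j ->
                  y_star (cls j) * mu j = z_star (srv j)) /\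
      (* (5) *) (forall j, always_nonbasic cls srv lam mu j ->
                  y_star (cls j) * mu j < z_star (srv j)) /\
      (* (6) *) (forall i, exists j, cls j = i /\ potentially_basic cls srv lam mu j) /\
      (* (7) *) (forall i, 0 < y_star i).
Proof.
move=> inj hlam hmu [xi0 hopt] HG hdo huniq.
split; first by eapply part1; eauto.
have o1 : dual_obj lam y_star = 1 by eapply obj1; eauto.
split => //.
split; first by move=> k; eapply zpos; eauto.
split; first by move=> j pb; eapply cslack; eauto.
split; first by move=> j nb; eapply slack; eauto.
split; first by move=> i; eapply basic_exists; eauto.
by move=> i; eapply ypos; eauto.
Qed.
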